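(* Let $r\ge 6$ and $n\ge 3$, and let $v=(u_1,1)\in V(C_r\times K_n)$. Then the subcomplex $st(v)\cap SC(v)$ of $I(C_r\times K_n)$ is the union of subcomplexes $X_1,\dots,X_{n-1},Y_1,\dots,Y_{n-1}$ such that: (1) for every $i$, $X_i\cong Y_i\cong I(G_{r-4,n})$; (2) if $r\ge7$, for every $i$, $X_i\cap Y_i\cong I(\mathring W_{r-5,n})$; (3) if $r\ge 7$, for every $i\ne j$, $X_i\cap Y_j\cong I(\mathring H_{r-5,n})$; (4) for every $i\ne j$, $X_i\cap X_j$ and $Y_i\cap Y_j$ are contractible; (5) the intersection of any $m\ge 3$ distinct complexes among $X_1,\dots,X_{n-1},Y_1,\dots,Y_{n-1}$ is contractible.
   Context: $C_r$ is the cycle with vertices $u_1,\dots,u_r$ (edges $u_iu_{i+1}$ and $u_ru_1$); $K_n$ is the complete graph on $\{1,\dots,n\}$; $C_r\times K_n$ is the categorical product ($(u_i,a)$ adjacent to $(u_{i'},b)$ iff $u_iu_{i'}$ is an edge of $C_r$ and $a\ne b$). $P_k$ is the path $u_1,\dots,u_k$ and $P_k\times K_n$ is defined analogously. For $k\ge2$: $W_{k,n}$ is obtained from $P_k\times K_n$ by adding vertices $v_1,v_2$ and edges $(u_1,i)v_1$ ($i\ne2$), $(u_k,i)v_2$ ($i\ne2$); $H_{k,n}$ is obtained from $P_k\times K_n$ by adding vertices $v_1,v_2$ and edges $(u_1,i)v_1$ ($i\ge2$), $(u_k,i)v_2$ ($i\ne2$); $G_{k,n}$ is $H_{k,n}$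 plus vertices $w_1,w_2$ and edges $v_1w_1,w_1w_2,w_2v_2$; $\mathring W_{k,n}$ is $W_{k,n}$ plus vertices $w_1,w,w_2$ and edges $w_1w,ww_2,v_1w_1,v_2w_2$; $\mathring H_{k,n}$ is $H_{k,n}$ plus vertices $w_1,w_2$ and edges $v_1w_1,v_2w_2$. $I(G)$ is the independence complex (simplices = non-empty independent vertex sets). In a simplicial complex $K$, $st(\sigma)=\{\tau\in K:\tau\cup\sigma\in K\}$; in $I(G)$, the star cluster of a vertex $v$ is $SC(v)=\bigcup_{u\in N(v)}st(u)$, where $N(v)$ is the set of neighbours of $v$ in $G$. $\cong$ denotes isomorphism of simplicial complexes. *)

(* Defs.v *)
From HB Require Import structures.
From mathcomp Require Import all_boot all_order all_algebra.

Set Implicit Arguments.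
Unset Strict Implicit.
Unset Printing Implicit Defensive.

Import Order.TTheory GRing.Theory Num.Theory.

(* a complex is its set of (non-empty) simplices, a {set {set V}}.      *)

Section Complexes.
Variable V : finType.

Definition indep_complex (adj : rel V) : {set {set V}} :=
  [set s : {set V} | (s != set0) &&
     [forall x in s, forall y in s, ~~ adj x y]].

Definition is_subcomplex (X K : {set {set V}}) : Prop :=
  X \subset K /\
  (forall s t : {set V}, s \in X -> t \subset s -> t != set0 -> t \in X).

Definition star (K : {set {set V}}) (sigma : {set V}) : {set {set V}} :=
  [set tau in K | tau :|: sigma \in K].

Definition star_cluster (adj : rel V) (v : V) : {set {set V}} :=
  \bigcup_(u | adj v u) star (indep_complex adj) [set u].

Definition vertices (K : {set {set V}}) : {set V} := \bigcup_(s in K) s.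

End Complexes.

Definition cx_iso (V W : finType) (K : {set {set V}}) (L : {set {set W}}) :
  Prop :=
  exists f : V -> W,
    {in vertices K &, injective f} /\ L = [set f @: s | s : {set V} in K].

(* Graphs.  u_i <-> index i-1 in 'I_r, vertex a of K_n <-> a-1 in 'I_n *)

Definition cyc_adj (r : nat) (i j : 'I_r) : bool :=
  (j == (i.+1 %% r)%N :> nat) || (i == (j.+1 %% r)%N :> nat).

Definition CK_adj (r n : nat) : rel ('I_r * 'I_n) :=
  fun x y => cyc_adj x.1 y.1 && (x.2 != y.2).

Definition path_adj (k : nat) (i j : 'I_k) : bool :=
  (j == i.+1 :> nat) || (i == j.+1 :> nat).

(* P_k x K_n plus m extra vertices; extra vertex 0 is v1, attached to
   (u_1, a) for a in p1; extra vertex 1 is v2, attached to (u_k, a) for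
   a in p2; the extra vertices form the graph with edge list es. *)
Definition ext_adj (k n m : nat) (p1 p2 : pred 'I_n) (es : seq (nat * nat))
  : rel (('I_k * 'I_n) + 'I_m) :=
  let att (a : 'I_k * 'I_n) (e : 'I_m) :=
    [&& (e == 0%N :> nat), (a.1 == 0%N :> nat) & p1 a.2] ||
    [&& (e == 1%N :> nat), (a.1 == k.-1 :> nat) & p2 a.2] in
  fun x y =>
    match x, y with
    | inl a, inl b => path_adj a.1 b.1 && (a.2 != b.2)
    | inl a, inr e => att a e
    | inr e, inl a => att a e
    | inr e, inr f => ((val e, val f) \in es) || ((val f, val e) \in es)
    end.

(* K_n vertex labels: "i != 2" is index != 1; "i >= 2" is index != 0 *)
Definition not2 (n : nat) : pred 'I_n := fun a => a != 1%N :> nat.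
Definition ge2 (n : nat) : pred 'I_n := fun a => a != 0%N :> nat.

(* G_{k,n} = H_{k,n} + w1, w2 ; extras: 0=v1, 1=v2, 2=w1, 3=w2 *)
Definition G_adj (k n : nat) := @ext_adj k n 4 (@ge2 n) (@not2 n)
  [:: (0, 2); (2, 3); (3, 1)]%N.

(* ring-W_{k,n} = W_{k,n} + w1, w, w2 ; extras 0=v1,1=v2,2=w1,3=w,4=w2 *)
Definition Wring_adj (k n : nat) := @ext_adj k n 5 (@not2 n) (@not2 n)
  [:: (2, 3); (3, 4); (0, 2); (1, 4)]%N.

(* ring-H_{k,n} = H_{k,n} + w1, w2 ; extras 0=v1, 1=v2, 2=w1, 3=w2 *)
Definition Hring_adj (k n : nat) := @ext_adj k n 4 (@ge2 n) (@not2 n)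
  [:: (0, 2); (1, 3)]%N.

From mathcomp Require Import all_classical all_reals all_analysis.
From mathcomp Require Import Rstruct Rstruct_topology.

Local Open Scope ring_scope.
Local Open Scope classical_set_scope.

Definition realization (V : finType) (K : {set {set V}}) :
  set {ptws V -> Rdefinitions.R} :=
  [set t | (forall v, 0 <= t v) /\ \sum_(v : V) t v = 1 /\
           finset (fun v => t v != 0) \in K].

Definition contractible (V : finType) (K : {set {set V}}) : Prop :=
  exists x0 : {ptws V -> Rdefinitions.R}, realization K x0 /\
  exists H : (Rdefinitions.R * {ptws V -> Rdefinitions.R})%type -> {ptws V -> Rdefinitions.R},
    {within `[0%R, 1%R] `*` realization K, continuous H} /\
    (forall t x, t \in `[0%R, 1%R] -> realization K x ->
                 realization K (H (t, x))) /\
    (forall x, realization K x -> H (0%R, x) = x /\ H (1%R, x) = x0).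

Local Close Scope classical_set_scope.

(* Main.v *)
Require Import Defs.
From HB Require Import structures.
From mathcomp Require Import all_boot all_order all_algebra.
From mathcomp Require Import all_classical all_reals all_analysis.
Set Implicit Arguments. Unset Strict Implicit. Unset Printing Implicit Defensive.
Import Order.TTheory GRing.Theory Num.Theory.
Import numFieldNormedType.Exports.
Local Open Scope ring_scope.
Local Open Scope classical_set_scope.

Lemma evc (R : realType) (V : finType) (i : V) : continuous (fun z : (R * {ptws V -> R})%type => z.2 i).
Proof.
move=> y.
apply: (@cvg_comp _ _ _ snd (fun g : {ptws V -> R} => g i)). exact: cvg_snd.
exact: (@proj_continuous _ (fun=> R) i).
Qed.

Lemma aux_cont (R : realType) (V : finType) (c i : V) : continuous (fun z : (R * {ptws V -> R})%type => (1 - z.1) * z.2 i + z.1 * (if i == c then 1 else 0)).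
Proof.
move=> y.
have h1 : (fun z : (R * {ptws V -> R})%type => z.1) @ y --> y.1 by exact: cvg_fst.
have h2 := @evc R V i y.
have h0 := @cvg_cst R (1:R) _ (nbhs y) (nbhs_filter y).
have he := @cvg_cst R (if i == c then 1 else 0 : R) _ (nbhs y) (nbhs_filter y).
have h3 := cvgB (FF:=nbhs_filter y) h0 h1.
have h4 := cvgM (FF:=nbhs_filter y) h3 h2.
have h5 := cvgM (FF:=nbhs_filter y) h1 he.
have h6 := cvgD (FF:=nbhs_filter y) h4 h5.
exact: h6.
Qed.

Definition Hc (R : realType) (V : finType) (c : V) (z : (R * {ptws V -> R})%type) : {ptws V -> R} :=
  fun v => (1 - z.1) * z.2 v + z.1 * (if v == c then 1 else 0).

Lemma Hc_cont (R : realType) (V : finType) (c : V) : continuous (Hc c : _ -> {ptws V -> R}).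
Proof.
move=> z.
pose Tc := (fun i => Topological.class (initial_topology (fun f : (forall i : V, (fun=> R) i) => f i))).
have FF := @fmap_filter _ _ (Hc c) (nbhs z) (nbhs_filter z).
have [_ H] := (@cvg_sup _ _ Tc (Hc c @ z) (Hc c z) FF).
apply: H => i.
have C : continuous (Hc c : _ -> initial_topology (fun f : (forall i : V, (fun=> R) i) => f i)).
  apply: continuous_comp_initial => y.
  exact: aux_cont.
exact: (C z).
Qed.

From mathcomp Require Import Rstruct Rstruct_topology.
Local Close Scope classical_set_scope.

Lemma cone_contractible (V : finType) (K : {set {set V}}) (c : V) :
  [set c] \in K -> (forall s, s \in K -> c |: s \in K) -> contractible K.
Proof.
move=> Kc Kcs.
pose x0 : {ptws V -> Rdefinitions.R} := fun v => if v == c then 1 else 0.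
have sum0 : \sum_(v : V) x0 v = 1.
  by rewrite /x0 -big_mkcond /= big_pred1_eq.
have sup0 : finset (fun v => x0 v != 0) = [set c].
  by apply/setP => v; rewrite !inE /x0; case: (v == c); rewrite ?oner_neq0 ?eqxx.
have rx0 : realization K x0.
  split; first by move=> v; rewrite /x0; case: eqP.
  by split => //; rewrite sup0.
exists x0; split => //.
exists (Hc c); split.
  apply: continuous_subspaceT; exact: (@Hc_cont Rdefinitions.R V c).
split.
  move=> t x /set_mem /=; rewrite in_itv /= => /andP[t0 t1] [xge [xs xK]].
  have Hx : Hc c (0, x) = x by apply: funext => v; rewrite /Hc /= subr0 mul1r mul0r addr0.
  have H1 : Hc c (1, x) = x0 by apply: funext => v; rewrite /Hc /= subrr mul0r add0r mul1r.
  have [->|tn0] := eqVneq t 0; first by rewrite Hx.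
  have [->|tn1] := eqVneq t 1; first by rewrite H1.
  have e0 v : 0 <= (if v == c then 1 else 0 : Rdefinitions.R) by case: (v == c).
  split.
    move=> v; rewrite /Hc /=; apply: addr_ge0; apply: mulr_ge0 => //; by rewrite subr_ge0.
  split.
    rewrite /Hc /= big_split /= -!mulr_sumr xs.
    have -> : \sum_(v : V) (if v == c then 1 else 0 : Rdefinitions.R) = 1 by exact: sum0.
    by rewrite !mulr1 subrK.
  have -> : [set v | Hc c (t, x) v != 0] = c |: [set v | x v != 0].
    apply/setP => v; rewrite !inE /Hc /=.
    rewrite paddr_eq0; last 2 first.
    - by apply: mulr_ge0 => //; rewrite subr_ge0.
    - exact: mulr_ge0.
    rewrite !mulf_eq0 subr_eq0 eq_sym (negbTE tn1) (negbTE tn0) /=.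
    by case: (v == c); rewrite ?oner_eq0 ?eqxx ?andbF ?andbT ?orbT.
  exact: Kcs.
move=> x rx; split; apply: funext => v; rewrite /Hc /=.
  by rewrite subr0 mul1r mul0r addr0.
by rewrite subrr mul0r add0r mul1r.
Qed.

Local Close Scope ring_scope.
From mathcomp Require Import all_boot all_order all_algebra all_fingroup zify.

Definition RS (V : finType) (adj : rel V) (S : {set V}) : {set {set V}} :=
  [set s in indep_complex adj | s \subset S].
Definition NS (V : finType) (adj : rel V) (x : V) : {set V} := [set y | ~~ adj x y].

Lemma indepP (V : finType) (adj : rel V) (s : {set V}) :
  reflect (s != set0 /\ forall x y, x \in s -> y \in s -> ~~ adj x y)
          (s \in indep_complex adj).
Proof.
rewrite /indep_complex inE; apply: (iffP andP) => -[h1 h2]; split => //.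
  by move=> x y xs ys; move/forallP: h2 => /(_ x); rewrite xs /= => /forallP /(_ y); rewrite ys.
by apply/forallP => x; apply/implyP => xs; apply/forallP => y; apply/implyP => ys; apply: h2.
Qed.

Lemma inRS (V : finType) (adj : rel V) S s :
  (s \in RS adj S) = (s \in indep_complex adj) && (s \subset S).
Proof. by rewrite /RS inE. Qed.

Lemma starE (V : finType) (K : {set {set V}}) sigma s :
  (s \in star K sigma) = (s \in K) && (s :|: sigma \in K).
Proof. by rewrite /star in_set. Qed.

Lemma star_RS (V : finType) (adj : rel V) (u : V) :
  symmetric adj -> irreflexive adj ->
  star (indep_complex adj) [set u] = RS adj (NS adj u).
Proof.
move=> sym irr; apply/setP => s; rewrite starE inRS.
case: (boolP (s \in indep_complex adj)) => hs0 //=.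
case/indepP: (hs0) => s0 hs.
apply/indepP/subsetP.
- move=> [_ h] x xs; rewrite inE; apply: h; by rewrite !inE ?xs ?eqxx ?orbT.
- move=> h; split.
    apply/set0Pn; exists u; by rewrite !inE eqxx orbT.
  move=> x y; rewrite !inE => /orP[xs|/eqP->] /orP[ys|/eqP->].
  + exact: hs.
  + by rewrite sym; move: (h x xs); rewrite inE.
  + by move: (h y ys); rewrite inE.
  + by rewrite irr.
Qed.

Lemma RS_sub (V : finType) (adj : rel V) S : is_subcomplex (RS adj S) (indep_complex adj).
Proof.
split.
  by apply/subsetP => s; rewrite inRS => /andP[].
move=> s t; rewrite !inRS => /andP[/indepP[_ hs] sS] ts t0.
apply/andP; split; last exact: subset_trans ts sS.
apply/indepP; split => // x y xt yt; apply: hs; exact: (subsetP ts).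
Qed.

Lemma RSI (V : finType) (adj : rel V) S T : RS adj S :&: RS adj T = RS adj (S :&: T).
Proof.
apply/setP => s; rewrite in_setI !inRS subsetI.
by case: (s \in indep_complex adj).
Qed.

Lemma bigcap_RS (V : finType) (adj : rel V) (I : finType) (J : {set I}) (F : I -> {set V}) j0 :
  j0 \in J -> \bigcap_(j in J) RS adj (F j) = RS adj (\bigcap_(j in J) F j).
Proof.
move=> j0J; apply/setP => s; rewrite inRS; apply/bigcapP/andP.
- move=> h; split; first by move: (h j0 j0J); rewrite inRS => /andP[].
  by apply/bigcapsP => j jJ; move: (h j jJ); rewrite inRS => /andP[].
- move=> [h1 /bigcapsP h2] j jJ; rewrite inRS h1; exact: h2.
Qed.

Lemma iso_RS (V W : finType) (adj : rel V) (adj' : rel W) (S : {set V}) (g : W -> V) (w0 : W) :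
  injective g -> (forall w, g w \in S) -> (forall x, x \in S -> exists w, g w = x) ->
  (forall w w', adj' w w' = adj (g w) (g w')) ->
  cx_iso (RS adj S) (indep_complex adj').
Proof.
move=> ginj gS Sg gadj.
pose f x := if [pick w | g w == x] is Some w then w else w0.
have fg w : f (g w) = w.
  rewrite /f; case: pickP => [w' /eqP /ginj //|/(_ w)]; by rewrite eqxx.
have gf x : x \in S -> g (f x) = x by move=> /Sg [w <-]; rewrite fg.
have vS x : x \in vertices (RS adj S) -> x \in S.
  by move=> /bigcupP [s]; rewrite inRS => /andP[_ /subsetP h] /h.
exists f; split.
  move=> x y /vS xS /vS yS fxy; by rewrite -(gf x xS) -(gf y yS) fxy.
apply/setP => t; apply/idP/imsetP.
- move=> /indepP [t0 ht]; exists (g @: t).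
    rewrite inRS; apply/andP; split.
      apply/indepP; split.
        by case/set0Pn: t0 => w wt; apply/set0Pn; exists (g w); apply: imset_f.
      move=> x y /imsetP[a at_ ->] /imsetP[b bt ->]; rewrite -gadj; exact: ht.
    by apply/subsetP => x /imsetP[a _ ->].
  by rewrite -imset_comp (eq_imset _ fg) imset_id.
- move=> [s]; rewrite inRS => /andP[/indepP[s0 hs] /subsetP sS] ->.
  apply/indepP; split.
    by case/set0Pn: s0 => x xs; apply/set0Pn; exists (f x); apply: imset_f.
  move=> a b /imsetP[x xs ->] /imsetP[y ys ->].
  by rewrite gadj !gf ?sS //; apply: hs.
Qed.

Lemma cyc_adjE r (i j : 'I_r.+1) :
  cyc_adj i j = [|| (j == i.+1 :> nat), (i == r :> nat) && (j == 0 :> nat),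
                    (i == j.+1 :> nat) | (j == r :> nat) && (i == 0 :> nat)].
Proof.
have hi := ltn_ord i; have hj := ltn_ord j.
have E (x : 'I_r.+1) : x.+1 %% r.+1 = if x == r :> nat then 0 else x.+1.
  have hx := ltn_ord x.
  case: eqP => [->|ne]; first by rewrite modnn.
  by rewrite modn_small //; lia.
rewrite /cyc_adj !E.
case: ifP => ei; case: ifP => ej; lia.
Qed.

Lemma CK_sym r n : symmetric (@CK_adj r n).
Proof.
move=> x y; rewrite /CK_adj /cyc_adj [x.2 == _]eq_sym; congr andb; by rewrite orbC.
Qed.

Lemma CK_irr r n : irreflexive (@CK_adj r n).
Proof. by move=> x; rewrite /CK_adj eqxx andbF. Qed.

Lemma valI r m : m <= r -> nat_of_ord (inord m : 'I_r.+1) = m.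
Proof. exact: inordK. Qed.

Lemma perm2 m (p q a b : 'I_m) : p != q -> a != b ->
  exists pi : {perm 'I_m}, pi p = a /\ pi q = b.
Proof.
move=> pq ab.
pose p1 := tperm p a. pose b' := p1 b. pose p2 := tperm q b'.
exists (p2 * p1)%g; rewrite !permM.
have bp : b' != p.
  apply: contra ab => /eqP e.
  have : p1 b' = p1 p by rewrite e.
  by rewrite /b' tpermK /p1 tpermL => ->.
have e1 : p2 p = p by rewrite /p2 tpermD // eq_sym.
have e2 : p2 q = b' by rewrite /p2 tpermL.
rewrite e1 e2 /b' /p1 tpermL tpermK; by split.
Qed.

Definition gG r n (pi : {perm 'I_n.+1}) (w : ('I_(r.+1 - 4) * 'I_n.+1) + 'I_4) : 'I_r.+1 * 'I_n.+1 :=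
  match w with
  | inl jc => (inord (jc.1 + 3), pi jc.2)
  | inr e => match val e with
             | 0 => (inord 2, pi ord0)
             | 1 => (ord_max, pi (inord 1))
             | 2 => (inord 1, pi (inord 1))
             | _ => (ord0, pi ord0) end
  end.

Lemma G_adj_ok r n (pi : {perm 'I_n.+1}) : 5 <= r -> 2 <= n ->
  forall w w', @G_adj (r.+1 - 4) n.+1 w w' = @CK_adj r.+1 n.+1 (@gG r n pi w) (@gG r n pi w').
Proof.
move=> hr hn.
have v1 : nat_of_ord (inord 1 : 'I_r.+1) = 1 by rewrite valI //; lia.
have v2 : nat_of_ord (inord 2 : 'I_r.+1) = 2 by rewrite valI //; lia.
have l1 : nat_of_ord (inord 1 : 'I_n.+1) = 1 by rewrite valI //; lia.
have vj (j : 'I_(r.+1 - 4)) : nat_of_ord (inord (j + 3) : 'I_r.+1) = j + 3.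
  by rewrite valI //; have := ltn_ord j; lia.
case=> [[j c]|[[|[|[|[|e]]]] he]] [[j' c']|[[|[|[|[|e']]]] he']] //=;
 rewrite /G_adj /ext_adj /CK_adj /path_adj /ge2 /not2 /= ?in_cons ?in_nil /= ?(inj_eq perm_inj) !cyc_adjE /= ?v1 ?v2 ?vj -?val_eqE /= ?l1;
 try (have := ltn_ord j); try (have := ltn_ord j'); try lia.

Qed.

Definition SX r n (a b : 'I_n.+1) : {set 'I_r.+1 * 'I_n.+1} :=
  NS (@CK_adj r.+1 n.+1) (ord0, b) :&: NS (@CK_adj r.+1 n.+1) (inord 1, a).

Lemma G_in r n (pi : {perm 'I_n.+1}) : 5 <= r -> 2 <= n ->   forall w, @gG r n pi w \in SX r (pi ord0) (pi (inord 1)).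
Proof.
move=> hr hn.
have v1 : nat_of_ord (inord 1 : 'I_r.+1) = 1 by rewrite valI //; lia.
have v2 : nat_of_ord (inord 2 : 'I_r.+1) = 2 by rewrite valI //; lia.
have l1 : nat_of_ord (inord 1 : 'I_n.+1) = 1 by rewrite valI //; lia.
have vj (j : 'I_(r.+1 - 4)) : nat_of_ord (inord (j + 3) : 'I_r.+1) = j + 3.
  by rewrite valI //; have := ltn_ord j; lia.
rewrite /SX.
case=> [[j c]|[[|[|[|[|e]]]] he]] //=; rewrite !inE /CK_adj /= ?(inj_eq perm_inj) !cyc_adjE /= ?v1 ?v2 ?vj -?val_eqE /= ?l1;
 try (have := ltn_ord j); try lia.
Qed.

Lemma G_onto r n (pi : {perm 'I_n.+1}) : 5 <= r -> 2 <= n ->   forall x, x \in SX r (pi ord0) (pi (inord 1)) -> exists w, @gG r n pi w = x.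
Proof.
move=> hr hn.
have v1 : nat_of_ord (inord 1 : 'I_r.+1) = 1 by rewrite valI //; lia.
have v2 : nat_of_ord (inord 2 : 'I_r.+1) = 2 by rewrite valI //; lia.
have l1 : nat_of_ord (inord 1 : 'I_n.+1) = 1 by rewrite valI //; lia.
move=> [l c]; rewrite /SX !inE /CK_adj /= !cyc_adjE /= ?v1 ?v2 => /andP[H1 H2].
have [hl|hl] := boolP (3 <= l <= r - 1).
  have hj : l - 3 < r.+1 - 4 by lia.
  exists (inl (Ordinal hj, (pi^-1)%g c)); rewrite /= permKV; congr pair.
  by apply: val_inj; rewrite /= valI; lia.
move: H1 H2; rewrite -(permKV pi c) !(inj_eq perm_inj) -!val_eqE /= ?l1 => H1 H2.
have : [|| (l == 0 :> nat), (l == 1 :> nat), (l == 2 :> nat) | (l == r :> nat)].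
  by have := ltn_ord l; lia.
case/or4P => /eqP hl'.
- exists (inr (@Ordinal 4 3 isT)); rewrite /=; congr pair.
    by apply: val_inj.
  by congr (pi _); apply: val_inj => /=; lia.
- exists (inr (@Ordinal 4 2 isT)); rewrite /=; congr pair.
    by apply: val_inj; rewrite /= v1.
  by congr (pi _); apply: val_inj => /=; lia.
- exists (inr (@Ordinal 4 0 isT)); rewrite /=; congr pair.
    by apply: val_inj; rewrite /= v2.
  by congr (pi _); apply: val_inj => /=; lia.
- exists (inr (@Ordinal 4 1 isT)); rewrite /=; congr pair.
    by apply: val_inj.
  by congr (pi _); apply: val_inj => /=; lia.
Qed.

Lemma G_inj r n (pi : {perm 'I_n.+1}) : 5 <= r -> 2 <= n -> injective (@gG r n pi).
Proof.
move=> hr hn.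
have v1 : nat_of_ord (inord 1 : 'I_r.+1) = 1 by rewrite valI //; lia.
have v2 : nat_of_ord (inord 2 : 'I_r.+1) = 2 by rewrite valI //; lia.
have vj (j : 'I_(r.+1 - 4)) : nat_of_ord (inord (j + 3) : 'I_r.+1) = j + 3.
  by rewrite valI //; have := ltn_ord j; lia.
case=> [[j c]|[[|[|[|[|e]]]] he]] [[j' c']|[[|[|[|[|e']]]] he']] //= E;
  have E1 := congr1 (fun x => nat_of_ord x.1) E; have E2 := congr1 snd E; move: E1 E2 => /=;
  rewrite ?v1 ?v2 ?vj; try (have := ltn_ord j); try (have := ltn_ord j'); try lia.
- move=> _ _ /eqP; rewrite eqn_add2r => /eqP /val_inj -> /perm_inj ->; by [].
all: try (move=> *; f_equal; exact: val_inj).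
Qed.

Definition SY r n (a b : 'I_n.+1) : {set 'I_r.+1 * 'I_n.+1} :=
  NS (@CK_adj r.+1 n.+1) (ord0, b) :&: NS (@CK_adj r.+1 n.+1) (ord_max, a).

Definition gW r n (pi : {perm 'I_n.+1}) (w : ('I_(r.+1 - 5) * 'I_n.+1) + 'I_5) : 'I_r.+1 * 'I_n.+1 :=
  match w with
  | inl jc => (inord (jc.1 + 3), pi jc.2)
  | inr e => match val e with
             | 0 => (inord 2, pi (inord 1))
             | 1 => (inord (r - 1), pi (inord 1))
             | 2 => (inord 1, pi ord0)
             | 3 => (ord0, pi (inord 1))
             | _ => (ord_max, pi ord0) end
  end.

Lemma W_adj_ok r n (pi : {perm 'I_n.+1}) : 6 <= r -> 2 <= n ->
  forall w w', @Wring_adj (r.+1 - 5) n.+1 w w' = @CK_adj r.+1 n.+1 (@gW r n pi w) (@gW r n pi w').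
Proof.
move=> hr hn.
have v1 : nat_of_ord (inord 1 : 'I_r.+1) = 1 by rewrite valI //; lia.
have v2 : nat_of_ord (inord 2 : 'I_r.+1) = 2 by rewrite valI //; lia.
have vr : nat_of_ord (inord (r - 1) : 'I_r.+1) = r - 1 by rewrite valI //; lia.
have l1 : nat_of_ord (inord 1 : 'I_n.+1) = 1 by rewrite valI //; lia.
have vj (j : 'I_(r.+1 - 5)) : nat_of_ord (inord (j + 3) : 'I_r.+1) = j + 3.
  by rewrite valI //; have := ltn_ord j; lia.
case=> [[j c]|[[|[|[|[|[|e]]]]] he]] [[j' c']|[[|[|[|[|[|e']]]]] he']] //=;
 rewrite /Wring_adj /ext_adj /CK_adj /path_adj /ge2 /not2 /= ?in_cons ?in_nil /= ?(inj_eq perm_inj) !cyc_adjE /= ?v1 ?v2 ?vr ?vj -?val_eqE /= ?l1;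
 try (have := ltn_ord j); try (have := ltn_ord j'); try lia.
Qed.

Lemma W_in r n (pi : {perm 'I_n.+1}) : 6 <= r -> 2 <= n ->
  forall w, @gW r n pi w \in SX r (pi (inord 1)) (pi ord0) :&: SY r (pi (inord 1)) (pi ord0).
Proof.
move=> hr hn.
have v1 : nat_of_ord (inord 1 : 'I_r.+1) = 1 by rewrite valI //; lia.
have v2 : nat_of_ord (inord 2 : 'I_r.+1) = 2 by rewrite valI //; lia.
have vr : nat_of_ord (inord (r - 1) : 'I_r.+1) = r - 1 by rewrite valI //; lia.
have l1 : nat_of_ord (inord 1 : 'I_n.+1) = 1 by rewrite valI //; lia.
have vj (j : 'I_(r.+1 - 5)) : nat_of_ord (inord (j + 3) : 'I_r.+1) = j + 3.
  by rewrite valI //; have := ltn_ord j; lia.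
rewrite /SX /SY.
case=> [[j c]|[[|[|[|[|[|e]]]]] he]] //=; rewrite !inE /CK_adj /= ?(inj_eq perm_inj) !cyc_adjE /= ?v1 ?v2 ?vr ?vj -?val_eqE /= ?l1;
 try (have := ltn_ord j); try lia.
Qed.

Lemma W_onto r n (pi : {perm 'I_n.+1}) : 6 <= r -> 2 <= n ->
  forall x, x \in SX r (pi (inord 1)) (pi ord0) :&: SY r (pi (inord 1)) (pi ord0) -> exists w, @gW r n pi w = x.
Proof.
move=> hr hn.
have v1 : nat_of_ord (inord 1 : 'I_r.+1) = 1 by rewrite valI //; lia.
have v2 : nat_of_ord (inord 2 : 'I_r.+1) = 2 by rewrite valI //; lia.
have vr : nat_of_ord (inord (r - 1) : 'I_r.+1) = r - 1 by rewrite valI //; lia.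
have l1 : nat_of_ord (inord 1 : 'I_n.+1) = 1 by rewrite valI //; lia.
move=> [l c]; rewrite /SX /SY !inE /CK_adj /= !cyc_adjE /= ?v1 ?v2 => /andP[/andP[H1 H2] /andP[H3 H4]].
have [hl|hl] := boolP (3 <= l <= r - 2).
  have hj : l - 3 < r.+1 - 5 by lia.
  exists (inl (Ordinal hj, (pi^-1)%g c)); rewrite /= permKV; congr pair.
  by apply: val_inj; rewrite /= valI; lia.
move: H1 H2 H3 H4; rewrite -(permKV pi c) !(inj_eq perm_inj) -!val_eqE /= ?l1 => H1 H2 H3 H4.
have : [|| (l == 0 :> nat), (l == 1 :> nat), (l == 2 :> nat), (l == r - 1 :> nat) | (l == r :> nat)].
  by have := ltn_ord l; lia.
case/orP => [/eqP hl'|/or4P[] /eqP hl'].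
- exists (inr (@Ordinal 5 3 isT)); rewrite /=; congr pair.
    by apply: val_inj.
  by congr (pi _); apply: val_inj => /=; lia.
- exists (inr (@Ordinal 5 2 isT)); rewrite /=; congr pair.
    by apply: val_inj; rewrite /= v1.
  by congr (pi _); apply: val_inj => /=; lia.
- exists (inr (@Ordinal 5 0 isT)); rewrite /=; congr pair.
    by apply: val_inj; rewrite /= v2.
  by congr (pi _); apply: val_inj => /=; lia.
- exists (inr (@Ordinal 5 1 isT)); rewrite /=; congr pair.
    by apply: val_inj; rewrite /= vr.
  by congr (pi _); apply: val_inj => /=; lia.
- exists (inr (@Ordinal 5 4 isT)); rewrite /=; congr pair.
    by apply: val_inj.
  by congr (pi _); apply: val_inj => /=; lia.
Qed.

Lemma W_inj r n (pi : {perm 'I_n.+1}) : 6 <= r -> 2 <= n -> injective (@gW r n pi).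
Proof.
move=> hr hn.
have v1 : nat_of_ord (inord 1 : 'I_r.+1) = 1 by rewrite valI //; lia.
have v2 : nat_of_ord (inord 2 : 'I_r.+1) = 2 by rewrite valI //; lia.
have vr : nat_of_ord (inord (r - 1) : 'I_r.+1) = r - 1 by rewrite valI //; lia.
have vj (j : 'I_(r.+1 - 5)) : nat_of_ord (inord (j + 3) : 'I_r.+1) = j + 3.
  by rewrite valI //; have := ltn_ord j; lia.
case=> [[j c]|[[|[|[|[|[|e]]]]] he]] [[j' c']|[[|[|[|[|[|e']]]]] he']] //= E;
  have E1 := congr1 (fun x => nat_of_ord x.1) E; have E2 := congr1 snd E; move: E1 E2 => /=;
  rewrite ?v1 ?v2 ?vr ?vj; try (have := ltn_ord j); try (have := ltn_ord j'); try lia.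
- move=> _ _ /eqP; rewrite eqn_add2r => /eqP /val_inj -> /perm_inj ->; by [].
all: try (move=> *; f_equal; exact: val_inj).
Qed.

Definition gH r n (pi : {perm 'I_n.+1}) (d : 'I_n.+1) (w : ('I_(r.+1 - 5) * 'I_n.+1) + 'I_4) : 'I_r.+1 * 'I_n.+1 :=
  match w with
  | inl jc => (inord (jc.1 + 3), pi jc.2)
  | inr e => match val e with
             | 0 => (inord 2, pi ord0)
             | 1 => (inord (r - 1), pi (inord 1))
             | 2 => (inord 1, pi d)
             | _ => (ord_max, pi d) end
  end.

Lemma H_adj_ok r n (pi : {perm 'I_n.+1}) (d : 'I_n.+1) : 6 <= r -> 2 <= n -> 2 <= d ->
  forall w w', @Hring_adj (r.+1 - 5) n.+1 w w' = @CK_adj r.+1 n.+1 (@gH r n pi d w) (@gH r n pi d w').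
Proof.
move=> hr hn hd.
have v1 : nat_of_ord (inord 1 : 'I_r.+1) = 1 by rewrite valI //; lia.
have v2 : nat_of_ord (inord 2 : 'I_r.+1) = 2 by rewrite valI //; lia.
have vr : nat_of_ord (inord (r - 1) : 'I_r.+1) = r - 1 by rewrite valI //; lia.
have l1 : nat_of_ord (inord 1 : 'I_n.+1) = 1 by rewrite valI //; lia.
have vj (j : 'I_(r.+1 - 5)) : nat_of_ord (inord (j + 3) : 'I_r.+1) = j + 3.
  by rewrite valI //; have := ltn_ord j; lia.
case=> [[j c]|[[|[|[|[|e]]]] he]] [[j' c']|[[|[|[|[|e']]]] he']] //=;
 rewrite /Hring_adj /ext_adj /CK_adj /path_adj /ge2 /not2 /= ?in_cons ?in_nil /= ?(inj_eq perm_inj) !cyc_adjE /= ?v1 ?v2 ?vr ?vj -?val_eqE /= ?l1;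
 try (have := ltn_ord j); try (have := ltn_ord j'); try lia.
Qed.

Lemma H_in r n (pi : {perm 'I_n.+1}) (d : 'I_n.+1) : 6 <= r -> 2 <= n -> 2 <= d ->
  forall w, @gH r n pi d w \in SX r (pi ord0) (pi d) :&: SY r (pi (inord 1)) (pi d).
Proof.
move=> hr hn hd.
have v1 : nat_of_ord (inord 1 : 'I_r.+1) = 1 by rewrite valI //; lia.
have v2 : nat_of_ord (inord 2 : 'I_r.+1) = 2 by rewrite valI //; lia.
have vr : nat_of_ord (inord (r - 1) : 'I_r.+1) = r - 1 by rewrite valI //; lia.
have l1 : nat_of_ord (inord 1 : 'I_n.+1) = 1 by rewrite valI //; lia.
have vj (j : 'I_(r.+1 - 5)) : nat_of_ord (inord (j + 3) : 'I_r.+1) = j + 3.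
  by rewrite valI //; have := ltn_ord j; lia.
rewrite /SX /SY.
case=> [[j c]|[[|[|[|[|e]]]] he]] //=; rewrite !inE /CK_adj /= ?(inj_eq perm_inj) !cyc_adjE /= ?v1 ?v2 ?vr ?vj -?val_eqE /= ?l1;
 try (have := ltn_ord j); try lia.
Qed.

Lemma H_onto r n (pi : {perm 'I_n.+1}) (d : 'I_n.+1) : 6 <= r -> 2 <= n -> 2 <= d ->
  forall x, x \in SX r (pi ord0) (pi d) :&: SY r (pi (inord 1)) (pi d) -> exists w, @gH r n pi d w = x.
Proof.
move=> hr hn hd.
have v1 : nat_of_ord (inord 1 : 'I_r.+1) = 1 by rewrite valI //; lia.
have v2 : nat_of_ord (inord 2 : 'I_r.+1) = 2 by rewrite valI //; lia.
have vr : nat_of_ord (inord (r - 1) : 'I_r.+1) = r - 1 by rewrite valI //; lia.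
have l1 : nat_of_ord (inord 1 : 'I_n.+1) = 1 by rewrite valI //; lia.
move=> [l c]; rewrite /SX /SY !inE /CK_adj /= !cyc_adjE /= ?v1 ?v2 => /andP[/andP[H1 H2] /andP[H3 H4]].
have [hl|hl] := boolP (3 <= l <= r - 2).
  have hj : l - 3 < r.+1 - 5 by lia.
  exists (inl (Ordinal hj, (pi^-1)%g c)); rewrite /= permKV; congr pair.
  by apply: val_inj; rewrite /= valI; lia.
move: H1 H2 H3 H4; rewrite -(permKV pi c) !(inj_eq perm_inj) -!val_eqE /= ?l1 => H1 H2 H3 H4.
have : [|| (l == 0 :> nat), (l == 1 :> nat), (l == 2 :> nat), (l == r - 1 :> nat) | (l == r :> nat)].
  by have := ltn_ord l; lia.
case/orP => [/eqP hl'|/or4P[] /eqP hl'].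
- lia.
- exists (inr (@Ordinal 4 2 isT)); rewrite /=; congr pair.
    by apply: val_inj; rewrite /= v1.
  by congr (pi _); apply: val_inj => /=; lia.
- exists (inr (@Ordinal 4 0 isT)); rewrite /=; congr pair.
    by apply: val_inj; rewrite /= v2.
  by congr (pi _); apply: val_inj => /=; lia.
- exists (inr (@Ordinal 4 1 isT)); rewrite /=; congr pair.
    by apply: val_inj; rewrite /= vr.
  by congr (pi _); apply: val_inj => /=; lia.
- exists (inr (@Ordinal 4 3 isT)); rewrite /=; congr pair.
    by apply: val_inj.
  by congr (pi _); apply: val_inj => /=; lia.
Qed.

Lemma H_inj r n (pi : {perm 'I_n.+1}) (d : 'I_n.+1) : 6 <= r -> 2 <= n -> injective (@gH r n pi d).
Proof.
move=> hr hn.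
have v1 : nat_of_ord (inord 1 : 'I_r.+1) = 1 by rewrite valI //; lia.
have v2 : nat_of_ord (inord 2 : 'I_r.+1) = 2 by rewrite valI //; lia.
have vr : nat_of_ord (inord (r - 1) : 'I_r.+1) = r - 1 by rewrite valI //; lia.
have vj (j : 'I_(r.+1 - 5)) : nat_of_ord (inord (j + 3) : 'I_r.+1) = j + 3.
  by rewrite valI //; have := ltn_ord j; lia.
case=> [[j c]|[[|[|[|[|e]]]] he]] [[j' c']|[[|[|[|[|e']]]] he']] //= E;
  have E1 := congr1 (fun x => nat_of_ord x.1) E; have E2 := congr1 snd E; move: E1 E2 => /=;
  rewrite ?v1 ?v2 ?vr ?vj; try (have := ltn_ord j); try (have := ltn_ord j'); try lia.
- move=> _ _ /eqP; rewrite eqn_add2r => /eqP /val_inj -> /perm_inj ->; by [].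
all: try (move=> *; f_equal; exact: val_inj).
Qed.

Definition rhol r (l : 'I_r.+1) : 'I_r.+1 := inord (if nat_of_ord l == 0 then 0 else r.+1 - l).
Arguments rhol : simpl never.
Definition rho r n (x : 'I_r.+1 * 'I_n.+1) : 'I_r.+1 * 'I_n.+1 := (rhol x.1, x.2).

Lemma rhol_val r (l : 'I_r.+1) : nat_of_ord (rhol l) = if nat_of_ord l == 0 then 0 else r.+1 - l.
Proof. rewrite /rhol valI //; have := ltn_ord l; case: ifP => h; lia. Qed.

Lemma rhoK r n : involutive (@rho r n).
Proof.
move=> [l c]; rewrite /rho /=; congr pair; apply: val_inj => /=; rewrite !rhol_val.
have := ltn_ord l; case: (nat_of_ord l =P 0) => [->|ne] //= hl.
rewrite ifF; first lia.
by apply/eqP; lia.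
Qed.

Lemma rho_adj r n x y : @CK_adj r.+1 n.+1 (rho x) (rho y) = CK_adj x y.
Proof.
rewrite /CK_adj /rho /=; congr andb; rewrite !cyc_adjE !rhol_val.
have := ltn_ord x.1; have := ltn_ord y.1.
repeat (case: ifP => ?); lia.
Qed.

Lemma rho_v0 r n (b : 'I_n.+1) : rho (ord0 : 'I_r.+1, b) = (ord0, b).
Proof. by congr pair; apply: val_inj => /=; rewrite rhol_val. Qed.

Lemma rho_max r n (a : 'I_n.+1) : 1 <= r -> rho (ord_max : 'I_r.+1, a) = (inord 1, a).
Proof.
move=> hr; congr pair; apply: val_inj => /=; rewrite rhol_val valI /=; try lia; case: ifP => ?; lia.
Qed.

Lemma SY_rho r n (a b : 'I_n.+1) x : 1 <= r -> (x \in SY r a b) = (rho x \in SX r a b).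
Proof.
move=> hr; rewrite /SX /SY !inE.
by rewrite -(rho_v0 r b) -(rho_max a hr) !rho_adj ?rho_v0.
Qed.

Lemma iso_refl r n (W : finType) (adj' : rel W) (g : W -> 'I_r.+1 * 'I_n.+1) (S : {set 'I_r.+1 * 'I_n.+1}) :
  injective g -> (forall w, g w \in S) -> (forall x, x \in S -> exists w, g w = x) ->
  (forall w w', adj' w w' = @CK_adj r.+1 n.+1 (g w) (g w')) ->
  [/\ injective (@rho r n \o g), (forall w, (@rho r n \o g) w \in [set x | rho x \in S]),
      (forall x, x \in [set x | rho x \in S] -> exists w, (@rho r n \o g) w = x) &
      (forall w w', adj' w w' = @CK_adj r.+1 n.+1 ((@rho r n \o g) w) ((@rho r n \o g) w'))].
Proof.
move=> ginj gS Sg gadj; split.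
- exact: inj_comp (can_inj (@rhoK r n)) ginj.
- by move=> w; rewrite inE /= rhoK.
- move=> x; rewrite inE => /Sg [w e]; exists w; by rewrite /= e rhoK.
- by move=> w w'; rewrite /= rho_adj.
Qed.

Lemma cone_X r n (a1 a2 : 'I_n.+1) : 5 <= r -> a1 != a2 ->
  forall x, x \in SX r a1 ord0 -> x \in SX r a2 ord0 -> ~~ @CK_adj r.+1 n.+1 (inord 1, ord0) x.
Proof.
move=> hr ne [l c]; rewrite /SX !inE /CK_adj /= !cyc_adjE /=.
have v1 : nat_of_ord (inord 1 : 'I_r.+1) = 1 by rewrite valI //; lia.
rewrite v1 => /andP[_ H1] /andP[_ H2].
apply/negP => /andP[H3 H4]; move: ne H1 H2 H3 H4.
rewrite -!val_eqE /=; lia.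
Qed.

Lemma cone_Y r n (a1 a2 : 'I_n.+1) : 5 <= r -> a1 != a2 ->
  forall x, x \in SY r a1 ord0 -> x \in SY r a2 ord0 -> ~~ @CK_adj r.+1 n.+1 (ord_max, ord0) x.
Proof.
move=> hr ne [l c]; rewrite /SY !inE /CK_adj /= !cyc_adjE /= => /andP[_ H1] /andP[_ H2].
apply/negP => /andP[H3 H4]; move: ne H1 H2 H3 H4.
rewrite -!val_eqE /=; have := ltn_ord l; lia.
Qed.

Lemma cX_in r n (a : 'I_n.+1) : 5 <= r ->
  ((inord 1, ord0) \in SX r a ord0) && ((inord 1, ord0) \in SY r a ord0).
Proof.
move=> hr; have v1 : nat_of_ord (inord 1 : 'I_r.+1) = 1 by rewrite valI //; lia.
rewrite /SX /SY !inE /CK_adj /= !cyc_adjE /= v1 -!val_eqE /=; lia.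
Qed.

Lemma cY_in r n (a : 'I_n.+1) : 5 <= r ->
  ((ord_max, ord0) \in SX r a ord0) && ((ord_max, ord0) \in SY r a ord0).
Proof.
move=> hr; have v1 : nat_of_ord (inord 1 : 'I_r.+1) = 1 by rewrite valI //; lia.
rewrite /SX /SY !inE /CK_adj /= !cyc_adjE /= v1 -!val_eqE /=; lia.
Qed.

Unset Implicit Arguments.

Lemma RS_cone (V : finType) (adj : rel V) (T : {set V}) (c : V) :
  symmetric adj -> irreflexive adj -> c \in T -> (forall x, x \in T -> ~~ adj c x) ->
  contractible (RS adj T).
Proof.
move=> sym irr cT hc; apply: (@cone_contractible _ _ c).
  rewrite inRS sub1set cT andbT; apply/indepP; split; first by apply/set0Pn; exists c; rewrite inE.
  by move=> x y; rewrite !inE => /eqP -> /eqP ->; rewrite irr.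
move=> s; rewrite !inRS => /andP[/indepP[s0 hs] sT].
apply/andP; split; last by rewrite subUset sub1set cT.
apply/indepP; split; first by apply/set0Pn; exists c; rewrite !inE eqxx.
have hc' x : x \in s -> ~~ adj c x by move=> xs; apply: hc; exact: (subsetP sT).
move=> x y; rewrite !inE => /orP[/eqP->|xs] /orP[/eqP->|ys].
- by rewrite irr.
- exact: hc'.
- by rewrite sym; apply: hc'.
- exact: hs.
Qed.

Theorem mainTheorem17 (r n : nat) (v : 'I_r * 'I_n) :
  (6 <= r)%N -> (3 <= n)%N -> val v.1 = 0%N -> val v.2 = 0%N ->
  exists X Y : 'I_n.-1 -> {set {set 'I_r * 'I_n}},
    let K := indep_complex (@CK_adj r n) in
    let Z := fun j : 'I_n.-1 + 'I_n.-1 =>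
               match j with inl i => X i | inr i => Y i end in
    (forall i, is_subcomplex (X i) K /\ is_subcomplex (Y i) K) /\
    star K [set v] :&: star_cluster (@CK_adj r n) v
      = \bigcup_(i : 'I_n.-1) (X i :|: Y i) /\
    (forall i, cx_iso (X i) (indep_complex (@G_adj (r - 4) n)) /\
               cx_iso (Y i) (indep_complex (@G_adj (r - 4) n))) /\
    ((7 <= r)%N -> forall i,
       cx_iso (X i :&: Y i) (indep_complex (@Wring_adj (r - 5) n))) /\
    ((7 <= r)%N -> forall i j, i != j ->
       cx_iso (X i :&: Y j) (indep_complex (@Hring_adj (r - 5) n))) /\
    (forall i j, i != j ->
       contractible (X i :&: X j) /\ contractible (Y i :&: Y j)) /\
    (forall S : {set 'I_n.-1 + 'I_n.-1}, (3 <= #|S|)%N ->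
       contractible (\bigcap_(j in S) Z j)).
Proof.
case: r v => [|r] v hr; first by [].
case: n v => [|n] v hn; first by [].
case: v => [l0 c0] /= hl hc.
have -> : l0 = ord0 by apply: val_inj.
have -> : c0 = ord0 by apply: val_inj.
have r5 : 5 <= r by lia.
have n2 : 2 <= n by lia.
pose adj := @CK_adj r.+1 n.+1.
pose lab (i : 'I_n) : 'I_n.+1 := lift ord0 i.
have labn0 i : lab i != ord0 by rewrite eq_sym neq_lift.
have labinj : injective lab by exact: lift_inj.
have o01 : (ord0 : 'I_n.+1) != inord 1 by rewrite -val_eqE /= valI //; lia.
have sym := @CK_sym r.+1 n.+1.
have irr := @CK_irr r.+1 n.+1.
exists (fun i => RS adj (SX r (lab i) ord0)), (fun i => RS adj (SY r (lab i) ord0)).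

split.
  by move=> i; split; apply: RS_sub.
split.
  have st u : star (indep_complex (@CK_adj r.+1 n.+1)) [set u] = RS adj (NS adj u) by exact: star_RS.
  have v1 : nat_of_ord (inord 1 : 'I_r.+1) = 1 by rewrite valI //; lia.
  rewrite /star_cluster st.
  apply/setP => s; rewrite in_setI.
  apply/andP/bigcupP.
  - move=> [h1 /bigcupP [u hu]]; rewrite st => h2.
    have hs : s \in RS adj (NS adj (ord0, ord0) :&: NS adj u) by rewrite -RSI in_setI h1 h2.
    clear h1 h2; move: u hu hs => [l c] hu hs.
    move: hu; rewrite /CK_adj /= cyc_adjE /= => /andP [hl2 hc2].
    case: (unliftP ord0 c) => [i ec|ec]; last by rewrite ec eqxx in hc2.
    exists i => //; rewrite in_setU.
    have [l1|l1] := eqVneq (nat_of_ord l) 1.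
      have el : l = inord 1 by apply: val_inj; rewrite /= v1.
      by apply/orP; left; move: hs; rewrite el ec.
    have el : l = ord_max by apply: val_inj => /=; lia.
    by apply/orP; right; move: hs; rewrite el ec.
  - move=> [i _]; rewrite in_setU => /orP[hs|hs].
      move: hs; rewrite /SX -RSI in_setI => /andP[h1 h2].
      split; first exact: h1.
      apply/bigcupP; exists (inord 1, lab i); last by rewrite st.
      rewrite /CK_adj /=; apply/andP; split; last by [].
      by rewrite cyc_adjE /= v1.
    move: hs; rewrite /SY -RSI in_setI => /andP[h1 h2].
    split; first exact: h1.
    apply/bigcupP; exists (ord_max, lab i); last by rewrite st.
    rewrite /CK_adj /=; apply/andP; split; last by [].
    by rewrite cyc_adjE /= eqxx !orbT.
split.
  move=> i.
  have [pi [p0 p1]] := perm2 o01 (labn0 i).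
  have eS : SX r (lab i) ord0 = SX r (pi ord0) (pi (inord 1)) by rewrite p0 p1.
  split.
    rewrite eS.
    exact: (iso_RS (inr ord0) (@G_inj r n pi r5 n2) (@G_in r n pi r5 n2) (@G_onto r n pi r5 n2) (@G_adj_ok r n pi r5 n2)).
  have eY : SY r (lab i) ord0 = [set x | rho x \in SX r (pi ord0) (pi (inord 1))].
    apply/setP => x; rewrite SY_rho; last lia.
    by rewrite [RHS]in_set eS.
  rewrite eY.
  have [a1 a2 a3 a4] := iso_refl (@G_inj r n pi r5 n2) (@G_in r n pi r5 n2) (@G_onto r n pi r5 n2) (@G_adj_ok r n pi r5 n2).
  exact: (iso_RS (inr ord0) a1 a2 a3 a4).
split.
  move=> h7 i; have r6 : 6 <= r by lia.
  have o10 : (inord 1 : 'I_n.+1) != ord0 by rewrite eq_sym.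
  have [pi [p1 p0]] := perm2 o10 (labn0 i).
  rewrite RSI.
  have -> : SX r (lab i) ord0 :&: SY r (lab i) ord0 = SX r (pi (inord 1)) (pi ord0) :&: SY r (pi (inord 1)) (pi ord0) by rewrite p1 p0.
  exact: (iso_RS (inr ord0) (@W_inj r n pi r6 n2) (@W_in r n pi r6 n2) (@W_onto r n pi r6 n2) (@W_adj_ok r n pi r6 n2)).
split.
  move=> h7 i j ij; have r6 : 6 <= r by lia.
  have lij : lab i != lab j by rewrite (inj_eq labinj).
  have [pi [p0 p1]] := perm2 o01 lij.
  pose d := (pi^-1)%g ord0.
  have pd : pi d = ord0 by rewrite /d permKV.
  have hd : 2 <= d.
    have d0 : d != ord0 by apply: contraNneq (labn0 i) => e; apply/eqP; rewrite -p0 -{1}e.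
    have d1 : d != inord 1 by apply: contraNneq (labn0 j) => e; apply/eqP; rewrite -p1 -{1}e.
    move: d0 d1; rewrite -!val_eqE /= valI //; lia.
  rewrite RSI.
  have -> : SX r (lab i) ord0 :&: SY r (lab j) ord0 = SX r (pi ord0) (pi d) :&: SY r (pi (inord 1)) (pi d) by rewrite p0 p1 pd.
  exact: (iso_RS (inr ord0) (@H_inj r n pi d r6 n2) (@H_in r n pi d r6 n2 hd) (@H_onto r n pi d r6 n2 hd) (@H_adj_ok r n pi d r6 n2 hd)).
split.
  move=> i j ij; have lij : lab i != lab j by rewrite (inj_eq labinj).
  split; rewrite RSI.
    apply: (@RS_cone _ adj _ (inord 1, ord0)) => //.
      by rewrite in_setI; case/andP: (@cX_in r n (lab i) r5) => -> _; case/andP: (@cX_in r n (lab j) r5) => -> _.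
    by move=> x; rewrite in_setI => /andP[h1 h2]; apply: (cone_X r5 lij).
  apply: (@RS_cone _ adj _ (ord_max, ord0)) => //.
    by rewrite in_setI; case/andP: (@cY_in r n (lab i) r5) => _ ->; case/andP: (@cY_in r n (lab j) r5) => _ ->.
  by move=> x; rewrite in_setI => /andP[h1 h2]; apply: (cone_Y r5 lij).
move=> S hS.
pose SZ (j : 'I_n + 'I_n) := match j with inl i => SX r (lab i) ord0 | inr i => SY r (lab i) ord0 end.
rewrite (eq_bigr (fun j => RS adj (SZ j))); last by case.
have [j0 j0S] : exists j0, j0 \in S by apply/set0Pn; rewrite -card_gt0; exact: leq_trans hS.
rewrite (bigcap_RS _ _ j0S).
have XX i1 i2 : inl i1 \in S -> inl i2 \in S -> i1 != i2 -> contractible (RS adj (\bigcap_(j in S) SZ j)).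
  move=> h1 h2 h12; have l12 : lab i1 != lab i2 by rewrite (inj_eq labinj).
  apply: (@RS_cone _ adj _ (inord 1, ord0)) => //.
    by apply/bigcapP => -[i|i] _ /=; case/andP: (@cX_in r n (lab i) r5).
  move=> x /bigcapP hx; apply: (cone_X r5 l12); [exact: (hx (inl i1) h1) | exact: (hx (inl i2) h2)].
have YY i1 i2 : inr i1 \in S -> inr i2 \in S -> i1 != i2 -> contractible (RS adj (\bigcap_(j in S) SZ j)).
  move=> h1 h2 h12; have l12 : lab i1 != lab i2 by rewrite (inj_eq labinj).
  apply: (@RS_cone _ adj _ (ord_max, ord0)) => //.
    by apply/bigcapP => -[i|i] _ /=; case/andP: (@cY_in r n (lab i) r5).
  move=> x /bigcapP hx; apply: (cone_Y r5 l12); [exact: (hx (inr i1) h1) | exact: (hx (inr i2) h2)].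
have [j1 j1S] : exists j1, j1 \in S :\ j0.
  move: (cardsD1 j0 S); rewrite j0S /= => c1.
  rewrite c1 in hS.
  apply/set0Pn; rewrite -card_gt0; move: hS; rewrite add1n ltnS => h.
  exact: (leq_trans (isT : 1 <= 2) h).
have [j2 j2S] : exists j2, j2 \in (S :\ j0) :\ j1.
  move: (cardsD1 j0 S); rewrite j0S /= => c1.
  move: (cardsD1 j1 (S :\ j0)); rewrite j1S /= => c2.
  rewrite c1 c2 in hS.
  apply/set0Pn; rewrite -card_gt0; move: hS; rewrite !add1n !ltnS => h.
  exact: h.
move: j1S j2S; rewrite !in_setD1 => /andP[n10 h1] /andP[n21 /andP[n20 h2]].
move: j0 j1 j2 j0S h1 h2 n10 n21 n20 => [i0|i0] [i1|i1] [i2|i2] h0 h1 h2 n10 n21 n20 //.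
- by apply: (XX i0 i1) => //; apply: contraNneq n10 => ->.
- by apply: (XX i0 i1) => //; apply: contraNneq n10 => ->.
- by apply: (XX i0 i2) => //; apply: contraNneq n20 => ->.
- by apply: (YY i1 i2) => //; apply: contraNneq n21 => ->.
- by apply: (XX i1 i2) => //; apply: contraNneq n21 => ->.
- by apply: (YY i0 i2) => //; apply: contraNneq n20 => ->.
- by apply: (YY i0 i1) => //; apply: contraNneq n10 => ->.
- by apply: (YY i0 i1) => //; apply: contraNneq n10 => ->.
Qed.
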